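(* There exists a universal constant $C<\infty$ such that for any normed space $(F,\|\cdot\|)$, any symmetric matrix $(a_{ij})_{i,j\le n}$ with entries in $F$, i.i.d. $\mathcal N(0,1)$ random variables $g_1,\dots,g_n$ and any $p\ge1$, \begin{align*} \sqrt{p}\sup_{\|x\|_2\leq 1}\mathbb{E}\Big\|\sum_{i}a_{ ii}x_ig_i\Big\| \leq C\Bigg(\mathbb{E}\Big\|\sum_{i,j}a_{ij}(g_ig_j-\delta_{ij})\Big\| +\sqrt{p}\sup_{\|(x_{ij})\|_2\leq 1}\Big\|\sum_{i,j}a_{ij}x_{ij}\Big\| + p\sup_{\|x\|_2\leq 1,\|y\|_2\leq 1}\Big\|\sum_{i,j}a_{ij}x_iy_j\Big\|\Bigg). \end{align*}
   Context: $\delta_{ij}$ is the Kronecker delta; sums run over $\{1,\dots,n\}$; suprema are over $x,y\in\mathbb{R}^n$ of Euclidean norm at most $1$ and real arrays $(x_{ij})$ with $\sum x_{ij}^2\le1$. *)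

(* Defs.v *)
From HB Require Import structures.
From mathcomp Require Import all_boot all_order all_algebra.
From mathcomp Require Import all_classical all_reals all_analysis.
From mathcomp Require Import Rstruct Rstruct_topology.
Set Implicit Arguments. Unset Strict Implicit. Unset Printing Implicit Defensive.
Import Order.TTheory GRing.Theory Num.Theory.
Local Open Scope classical_set_scope.
Local Open Scope ring_scope.

Definition mutually_independent_RV {d} {T : measurableType d} {R : realType}
  (P : probability T R) (I : finType) (g : I -> {RV P >-> R}) : Prop :=
  forall (J : {set I}) (B : I -> set R), (forall i, measurable (B i)) ->
    P (\bigcap_(i in [set i | i \in J]) (g i @^-1` B i)) =
    (\prod_(i in J) P (g i @^-1` B i))%E.

Definition std_gaussian_RV {d} {T : measurableType d} {R : realType}
  (P : probability T R) (X : {RV P >-> R}) : Prop :=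
  forall A : set R, measurable A -> distribution P X A = normal_prob 0 1 A.

Definition unit_ball_vec {R : realType} (n : nat) : set ('I_n -> R) :=
  [set x | \sum_(i < n) x i ^+ 2 <= 1].

Definition unit_ball_mat {R : realType} (n : nat) : set ('I_n -> 'I_n -> R) :=
  [set x | \sum_(i < n) \sum_(j < n) x i j ^+ 2 <= 1].

(* Main.v *)
Require Import Defs.
From HB Require Import structures.
From mathcomp Require Import all_boot all_order all_algebra.
From mathcomp Require Import all_classical all_reals all_analysis.
From mathcomp Require Import Rstruct Rstruct_topology.
From mathcomp Require Import ring lra measurable_realfun.
Import Order.TTheory GRing.Theory Num.Theory.
Local Open Scope classical_set_scope.
Local Open Scope ring_scope.
Import numFieldNormedType.Exports.

Section G.
Context (R : realType).

Lemma pointwise_bd (x : R) :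
  x ^+ 2 * normal_pdf 0 1 x <= (16/3) * normal_pdf 0 2 x.
Proof.
rewrite /normal_pdf oner_eq0 pnatr_eq0 /=.
rewrite /normal_fun /normal_peak !subr0 expr1n mul1r.
have -> : Num.sqrt ((2:R) ^+ 2 * pi *+ 2) = 2 * Num.sqrt (pi *+ 2).
  rewrite -mulrnAr sqrtrM ?sqr_ge0 // sqrtr_sqr ger0_norm //.
  idtac.
set s := Num.sqrt (pi *+ 2).
have s0 : 0 < s by rewrite sqrtr_gt0 mulrn_wgt0 // pi_gt0.
set t := x ^+ 2 * (3/8).
have e : - x ^+ 2 / 2 = - x ^+ 2 / ((2:R) ^+ 2 *+ 2) - t.
  by by rewrite /t; field.
rewrite e exp.expRD.
have ht : 0 <= t by rewrite /t mulr_ge0 // sqr_ge0.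
have key : x ^+ 2 * expR (- t) <= 8/3.
  have h1 := expR_ge1Dx t.
  have := expR_gt0 t => h2.
  rewrite expRN.
  have -> : x ^+ 2 = t * (8/3) by by rewrite /t; field.
  rewrite ler_pdivrMr //. lra.
set E := expR (- x ^+ 2 / ((2:R) ^+ 2 *+ 2)).
have E0 : 0 <= E by apply: expR_ge0.
rewrite invfM.
set u := s^-1.
have u0 : 0 < u by rewrite invr_gt0.
have uE : 0 <= u * E by rewrite mulr_ge0 // ltW.
have H := ler_wpM2r uE key.
set K := expR (- t) in H *.
set y := x ^+ 2 in H *.
have -> : 16 / 3 * (2^-1 * u * E) = 8/3 * (u * E) by field.
have -> : y * (u * (E * K)) = y * K * (u * E) by ring.
exact: H.
Qed.


Lemma gauss_sq :
  (\int[normal_prob (0:R) 1]_x (x ^+ 2)%:E <= (16/3 : R)%:E)%E.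
Proof.
have numu := normal_prob_dominates (0:R) 1.
rewrite -(Radon_Nikodym_SigmaFinite.change_of_variables numu) //=; last 2 first.
- by move=> x; rewrite lee_fin sqr_ge0.
- by apply/measurable_EFinP; apply: measurable_funX.
set RN := Radon_Nikodym_SigmaFinite.f _ _.
have ae : ae_eq lebesgue_measure setT RN (fun x => (normal_pdf (0:R) 1 x)%:E).
  apply: integral_ae_eq => //.
  - exact: Radon_Nikodym_SigmaFinite.f_integrable.
  - by apply/measurable_EFinP; apply: measurable_normal_pdf.
  - by move=> E _ mE; rewrite -Radon_Nikodym_SigmaFinite.f_integral.
have -> : (\int[lebesgue_measure]_x ((x ^+ 2)%:E * RN x) = \int[lebesgue_measure]_x ((x ^+ 2)%:E * (normal_pdf (0:R) 1 x)%:E))%E.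
  apply: ae_eq_integral => //.
- apply: emeasurable_funM.
    by apply/measurable_EFinP; apply: measurable_funX.
  apply: measurable_int. exact: Radon_Nikodym_SigmaFinite.f_integrable.
- apply: emeasurable_funM.
    by apply/measurable_EFinP; apply: measurable_funX.
  by apply/measurable_EFinP; apply: measurable_normal_pdf.
- exact: ae_eqe_mul2l.
apply: (@le_trans _ _ (\int[lebesgue_measure]_x ((16/3 : R)%:E * (normal_pdf (0:R) 2 x)%:E))%E).
  apply: ge0_le_integral => //.
  - by move=> x _; rewrite -EFinM lee_fin mulr_ge0 ?sqr_ge0 ?normal_pdf_ge0.
  - apply/measurable_EFinP; apply: measurable_funM.
      exact: measurable_funX.
    exact: measurable_normal_pdf.
  - apply/measurable_EFinP; apply: measurable_funM => //.
    exact: measurable_normal_pdf.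
  - by move=> x _; rewrite -!EFinM lee_fin pointwise_bd.
rewrite ge0_integralZl_EFin //; try (by apply/measurable_EFinP; exact: measurable_normal_pdf); try (by move=> x _; rewrite lee_fin normal_pdf_ge0).
by rewrite integral_normal_pdf mule1.
Qed.

End G.

Section PW.
Context (R : realType) (F : normedModType R) (n : nat) (a : 'I_n -> 'I_n -> F).

Lemma pw (y : 'I_n -> R) (r : R) :
  (forall X : 'I_n -> 'I_n -> R, \sum_(i < n) \sum_(j < n) X i j ^+ 2 <= 1 ->
     `|\sum_(i < n) \sum_(j < n) X i j *: a i j| <= r) ->
  `|\sum_(i < n) y i *: a i i| <= r / 2 * (1 + \sum_(i < n) y i ^+ 2).
Proof.
move=> H.
set Q := \sum_(i < n) y i ^+ 2.
have Q0 : 0 <= Q by apply: sumr_ge0 => i _; apply: sqr_ge0.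
set c := 2 / (1 + Q).
have c0 : 0 < c by rewrite divr_gt0 // ltr_pwDl.
have := H (fun i j => if i == j then c * y i else 0).
have E1 : forall i : 'I_n, \sum_(j < n) (if i == j then c * y i else 0) ^+ 2 = (c * y i) ^+ 2.
  move=> i; rewrite (bigD1 i) //= eqxx big1 ?addr0 // => j /negbTE.
  by rewrite eq_sym => ->; rewrite expr0n.
have E2 : forall i : 'I_n, \sum_(j < n) (if i == j then c * y i else 0) *: a i j = (c * y i) *: a i i.
  move=> i; rewrite (bigD1 i) //= eqxx big1 ?addr0 // => j /negbTE.
  by rewrite eq_sym => ->; rewrite scale0r.
under eq_bigr do rewrite E1.
under [X in `|X|]eq_bigr do rewrite E2.
have -> : \sum_(i < n) (c * y i) ^+ 2 = c ^+ 2 * Q.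
  by rewrite /Q mulr_sumr; apply: eq_bigr => i _; rewrite exprMn.
have -> : \sum_(i < n) (c * y i) *: a i i = c *: \sum_(i < n) y i *: a i i.
  by rewrite scaler_sumr; apply: eq_bigr => i _; rewrite scalerA.
rewrite normrZ gtr0_norm //.
have hc : c ^+ 2 * Q <= 1.
  rewrite /c expr_div_n mulrAC ler_pdivrMr ?exprn_gt0 ?ltr_pwDl // mul1r.
  have : 0 <= (1 - Q) ^+ 2 by apply: sqr_ge0.
  rewrite !expr2; lra.
move=> /(_ hc) h.
have -> : r / 2 * (1 + Q) = r / c.
  by rewrite /c invf_div mulrA mulrAC.
by rewrite (ler_pdivlMr _ _ c0) mulrC.
Qed.

End PW.

Lemma le_int_gen {d} {T : measurableType d} {R : realType} (mu : {measure set T -> \bar R})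
  (f1 f2 : T -> \bar R) : (forall x, (0 <= f1 x)%E) -> (forall x, (f1 x <= f2 x)%E) ->
  (\int[mu]_x f1 x <= \int[mu]_x f2 x)%E.
Proof.
move=> f0 f12.
rewrite !ge0_integralE //; last by move=> x _; apply: le_trans (f12 x).
apply: ereal_sup_le => _ /= [h hf <-]; exists h => //= x.
apply: le_trans (hf x) _.
by rewrite /patch; case: ifP => _ //; apply: f12.
Qed.

Definition idTR (R : realType) : measurableTypeR R -> R := idfun.

HB.instance Definition _ (R : realType) :=
  @isMeasurableFun.Build _ _ _ _ (@idTR R) (@measurable_id _ _ setT).

Lemma gauss_sq' (R : realType) :
  (\int[distribution (normal_prob (0:R) 1) (idTR R)]_y (y ^+ 2)%:E <= (16/3 : R)%:E)%E.
Proof.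
have mf : measurable_fun [set: R] (fun y : R => (y ^+ 2)%:E).
  by apply/measurable_EFinP; apply: measurable_funX.
have f0 : forall y : R, (0 <= (y ^+ 2)%:E)%E by move=> y; rewrite lee_fin sqr_ge0.
rewrite (ge0_integral_distribution _ mf f0).
exact: gauss_sq.
Qed.

Lemma E_sq {d} {T : measurableType d} {R : realType} (P : probability T R)
  (X : {RV P >-> R}) : std_gaussian_RV X ->
  (\int[P]_w ((X w) ^+ 2)%:E <= (16/3 : R)%:E)%E.
Proof.
move=> hX.
have mf : measurable_fun [set: R] (fun y : R => (y ^+ 2)%:E).
  by apply/measurable_EFinP; apply: measurable_funX.
have f0 : forall y : R, (0 <= (y ^+ 2)%:E)%E by move=> y; rewrite lee_fin sqr_ge0.
have H := @ge0_integral_distribution _ _ _ _ _ P X (fun y : R => (y ^+ 2)%:E) mf f0.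
rewrite /comp /= in H.
rewrite -H.
apply: le_trans (gauss_sq' R); rewrite le_eqVlt; apply/orP; left; apply/eqP.
apply: eq_measure_integral => A mA _.
exact: (hX A mA).
Qed.

Lemma Ex_bound {d} {T : measurableType d} {R : realType} (F : normedModType R) (n : nat)
  (a : 'I_n -> 'I_n -> F) (P : probability T R) (g : 'I_n -> {RV P >-> R})
  (x : 'I_n -> R) (r : R) :
  (forall i, std_gaussian_RV (g i)) -> \sum_(i < n) x i ^+ 2 <= 1 -> 0 <= r ->
  (forall X : 'I_n -> 'I_n -> R, \sum_(i < n) \sum_(j < n) X i j ^+ 2 <= 1 ->
     `|\sum_(i < n) \sum_(j < n) X i j *: a i j| <= r) ->
  ('E_P[fun w => (`|\sum_(i < n) (x i * g i w) *: a i i|)%R] <= (4 * r)%:E)%E.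
Proof.
move=> hg hx r0 hr.
rewrite unlock /=.
apply: le_trans (@le_int_gen _ _ _ P _ (fun w => ((r/2)%:E * (1%:E + \sum_(i < n) ((x i * g i w) ^+ 2)%:E))%E) _ _) _.
- by move=> w; rewrite lee_fin.
- move=> w; rewrite sumEFin -EFinD -EFinM lee_fin.
  exact: (@pw _ _ _ a (fun i => x i * g i w)).
have mi : forall i, measurable_fun [set: T] (fun w => ((x i * g i w) ^+ 2)%:E).
  move=> i; apply/measurable_EFinP; apply: measurable_funX.
  by apply: measurable_funM.
have mS : measurable_fun [set: T] (fun w => \sum_(i < n) ((x i * g i w) ^+ 2)%:E)%E.
  by apply: emeasurable_sum.
have S0 : forall w, (0 <= \sum_(i < n) ((x i * g i w) ^+ 2)%:E)%E.
  by move=> w; rewrite sumEFin lee_fin; apply: sumr_ge0 => i _; apply: sqr_ge0.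
rewrite ge0_integralZl_EFin //; last 3 first.
- by move=> w _; apply: adde_ge0.
- by apply: emeasurable_funD.
- by rewrite divr_ge0.
rewrite ge0_integralD //.
rewrite integral_cst // [X in (1 * X)%E](_ : _ = 1%E); last exact: probability_setT.
rewrite mul1e.
rewrite ge0_integral_sum //; last by move=> i w _; rewrite lee_fin sqr_ge0.
have HS : (\sum_(i < n) \int[P]_w ((x i * g i w) ^+ 2)%:E <= (16/3 : R)%:E)%E.
  apply: (@le_trans _ _ ((\sum_(i < n) ((x i) ^+ 2 * (16/3 : R)))%:E)%E).
    rewrite -sumEFin; apply: lee_sum => i _.
    under eq_integral do rewrite exprMn EFinM.
    rewrite ge0_integralZl_EFin //; last 3 first.
    - by move=> w _; rewrite lee_fin sqr_ge0.
    - by apply/measurable_EFinP; apply: measurable_funX.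
    - by apply: sqr_ge0.
    rewrite EFinM; apply: (lee_wpmul2l _ (E_sq _ _ (hg i))); by rewrite lee_fin sqr_ge0.
  rewrite lee_fin -mulr_suml.
  move: hx; set S := \sum_(i < n) _; lra.
apply: (@le_trans _ _ ((r/2)%:E * (1 + 16/3 : R)%:E)%E).
  by apply: lee_wpmul2l; [rewrite lee_fin divr_ge0 | rewrite EFinD; apply: leeD].
rewrite -EFinM lee_fin.
lra.
Qed.

Theorem proposition4p2 :
  exists C : Rdefinitions.R,
  forall (F : normedModType Rdefinitions.R) (n : nat) (a : 'I_n -> 'I_n -> F)
    (d : measure_display) (T : measurableType d)
    (P : probability T Rdefinitions.R) (g : 'I_n -> {RV P >-> (Rdefinitions.R : realType)})
    (p : Rdefinitions.R),
  (forall i j, a i j = a j i) ->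
  mutually_independent_RV g ->
  (forall i, std_gaussian_RV (g i)) ->
  1 <= p ->
  ((Num.sqrt p)%:E *
     ereal_sup [set 'E_P[fun w => (`| \sum_(i < n) (x i * g i w) *: a i i |)%R]
               | x in @unit_ball_vec _ n]
   <= C%:E *
     ('E_P[fun w => (`| \sum_(i < n) \sum_(j < n)
                         (g i w * g j w - (i == j)%:R) *: a i j |)%R]
      + (Num.sqrt p)%:E *
          ereal_sup [set (`| \sum_(i < n) \sum_(j < n) x i j *: a i j |)%R%:E
                    | x in @unit_ball_mat _ n]
      + p%:E *
          ereal_sup [set (`| \sum_(i < n) \sum_(j < n) (x i * y j) *: a i j |)%R%:E
                    | x in @unit_ball_vec _ n & y in @unit_ball_vec _ n]))%E.
Proof.
exists 4.
move=> F n a d T P g p sym indep hg p1.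
set S := ereal_sup [set (`| \sum_(i < n) \sum_(j < n) x i j *: a i j |)%R%:E
                    | x in @unit_ball_mat _ n].
set S2 := ereal_sup [set (`| \sum_(i < n) \sum_(j < n) (x i * y j) *: a i j |)%R%:E
                    | x in @unit_ball_vec _ n & y in @unit_ball_vec _ n].
set Et := ('E_P[_])%E.
have S0 : (0 <= S)%E.
  apply: ereal_sup_ubound; exists (fun _ _ => 0).
    rewrite /unit_ball_mat /=.
    by rewrite big1 // => i _; rewrite big1 // => j _; rewrite expr0n.
  by rewrite big1 ?normr0 // => i _; rewrite big1 // => j _; rewrite scale0r.
have S20 : (0 <= S2)%E.
  apply: ereal_sup_ubound; exists (fun _ => 0).
    by rewrite /unit_ball_vec /= big1 // => i _; rewrite expr0n.
  exists (fun _ => 0).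
    by rewrite /unit_ball_vec /= big1 // => i _; rewrite expr0n.
  by rewrite big1 ?normr0 // => i _; rewrite big1 // => j _; rewrite mul0r scale0r.
have Et0 : (0 <= Et)%E.
  by rewrite /Et unlock; apply: integral_ge0 => w _; rewrite lee_fin normr_ge0.
have sp : 0 < Num.sqrt p by rewrite sqrtr_gt0; lra.
have p0 : 0 <= p by lra.
have pS2 : (0 <= p%:E * S2)%E by apply: mule_ge0; rewrite ?lee_fin.
move: S0; case E : S => [r| |] // S0.
- have r0 : 0 <= r by rewrite -lee_fin.
  have ub : (ereal_sup [set 'E_P[fun w => (`| \sum_(i < n) (x i * g i w) *: a i i |)%R]
               | x in @unit_ball_vec _ n] <= (4 * r)%:E)%E.
    apply: ub_ereal_sup => _ [x hx <-]; apply: Ex_bound => //.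
    move=> X hX; rewrite -lee_fin -E; apply: ereal_sup_ubound; exists X => //.
  apply: le_trans (lee_wpmul2l _ ub) _; first by rewrite lee_fin ltW.
  have -> : ((Num.sqrt p)%:E * (4 * r)%:E = 4%:E * (Num.sqrt p * r)%:E)%E.
    by rewrite -!EFinM; congr EFin; ring.
  apply: lee_wpmul2l; first by rewrite lee_fin.
  rewrite EFinM; apply: le_trans (leeDr _ Et0) _.
  by apply: leeDl.
- have -> : ((Num.sqrt p)%:E * +oo = +oo)%E by rewrite mulry gtr0_sg // mul1e.
  rewrite addey; last by rewrite gt_eqF // (lt_le_trans _ Et0).
  rewrite addye; last by rewrite gt_eqF // (lt_le_trans _ pS2).
  by rewrite mulry gtr0_sg // mul1e leey.
Qed.
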